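(* Let $\mathfrak{k}$ be a field, $n\ge 2$, and ${\mathcal A}=(x_{i_1\ldots i_n})_{1\le i_j\le r_j}$ a box-shaped matrix of distinct indeterminates with polynomial ring $\mathfrak{k}[{\mathcal A}]$. Let $F\in\mathfrak{k}[{\mathcal A}]$. If for some entry $x_{i_1\ldots i_n}$ of ${\mathcal A}$ there is a positive integer $\lambda$ with $x_{i_1\ldots i_n}^\lambda F\in I_2({\mathcal A})$, then for every entry $x_{j_1\ldots j_n}$ of ${\mathcal A}$ there is a non-negative integer $\nu$ with $x_{j_1\ldots j_n}^\nu F\in I_2({\mathcal A})$.
   Context: $\mathfrak{k}$ is algebraically closed of characteristic $0$. The $2\times2$ minors of a box-shaped matrix $(a_{i_1\ldots i_n})$ are $a_{i_1\ldots i_l\ldots i_n}a_{j_1\ldots j_l\ldots j_n}-a_{i_1\ldots i_{l-1}j_li_{l+1}\ldots i_n}a_{j_1\ldots j_{l-1}i_lj_{l+1}\ldots j_n}$ for any coordinate $l$ and any two index points; $I_2({\mathcal A})$ is the ideal they generate. *)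

(* Defs.v *)
From HB Require Import structures.
From mathcomp Require Import all_boot all_order all_algebra.
From mathcomp Require Import mpoly.
Set Implicit Arguments. Unset Strict Implicit. Unset Printing Implicit Defensive.
Import GRing.Theory.
Local Open Scope ring_scope.

(* Index points of an n-dimensional box with side lengths r j:
   a point is (i_1,...,i_n) with i_j in 'I_(r j) (0-based). *)
Definition boxpt (n : nat) (r : 'I_n -> nat) : finType :=
  {dffun forall j : 'I_n, 'I_(r j)}.

Definition boxring (k : fieldType) (n : nat) (r : 'I_n -> nat) :=
  {mpoly k[#|boxpt r|]}.

Definition xvar (k : fieldType) (n : nat) (r : 'I_n -> nat) (p : boxpt r)
  : boxring k r := 'X_(enum_rank p).

Definition swapc (n : nat) (r : 'I_n -> nat) (a b : boxpt r) (l : 'I_n)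
  : boxpt r := @finfun 'I_n (fun j => 'I_(r j)) (dfwith (fun j => a j) (b l)).

Definition minor2 (k : fieldType) (n : nat) (r : 'I_n -> nat)
  (l : 'I_n) (a b : boxpt r) : boxring k r :=
  xvar k a * xvar k b - xvar k (swapc a b l) * xvar k (swapc b a l).

Definition is_minor2 (k : fieldType) (n : nat) (r : 'I_n -> nat)
  (g : boxring k r) : Prop :=
  exists l a b, g = minor2 k l a b.

Definition in_ideal_gen (R : comNzRingType) (G : R -> Prop) (F : R) : Prop :=
  exists s : seq (R * R), (forall q, q \in s -> G q.2) /\
    F = \sum_(q <- s) q.1 * q.2.

Definition I2 (k : fieldType) (n : nat) (r : 'I_n -> nat) (F : boxring k r)
  : Prop := in_ideal_gen (@is_minor2 k n r) F.

(* Main.v *)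
Require Import Defs.
From HB Require Import structures.
From mathcomp Require Import all_boot all_order all_algebra.
From mathcomp Require Import mpoly ring.
Set Implicit Arguments. Unset Strict Implicit. Unset Printing Implicit Defensive.
Import GRing.Theory.
Local Open Scope ring_scope.


Lemma I2_0 (k : fieldType) (n : nat) (r : 'I_n -> nat) : I2 (0 : boxring k r).
Proof. by exists [::]; split => // ; rewrite big_nil. Qed.

Lemma I2_minor (k : fieldType) (n : nat) (r : 'I_n -> nat) l (a b : boxpt r) :
  I2 (minor2 k l a b).
Proof.
exists [:: (1, minor2 k l a b)]; split.
  by move=> q; rewrite inE => /eqP -> /=; exists l, a, b.
by rewrite big_seq1 mul1r.
Qed.

Lemma I2_add (k : fieldType) (n : nat) (r : 'I_n -> nat) (f g : boxring k r) :
  I2 f -> I2 g -> I2 (f + g).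
Proof.
move=> [s [Hs ->]] [t [Ht ->]]; exists (s ++ t); split.
  by move=> q; rewrite mem_cat => /orP [/Hs|/Ht].
by rewrite big_cat.
Qed.

Lemma I2_mull (k : fieldType) (n : nat) (r : 'I_n -> nat) (c f : boxring k r) :
  I2 f -> I2 (c * f).
Proof.
move=> [s [Hs ->]]; exists [seq (c * q.1, q.2) | q <- s]; split.
  by move=> q /mapP [q' /Hs H ->].
by rewrite big_map mulr_sumr; apply: eq_bigr => q _ /=; rewrite mulrA.
Qed.

Lemma I2_opp (k : fieldType) (n : nat) (r : 'I_n -> nat) (f : boxring k r) :
  I2 f -> I2 (- f).
Proof. by move=> H; rewrite -mulN1r; apply: I2_mull. Qed.

Lemma I2_sub (k : fieldType) (n : nat) (r : 'I_n -> nat) (f g : boxring k r) :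
  I2 f -> I2 g -> I2 (f - g).
Proof. by move=> Hf Hg; apply: I2_add => //; apply: I2_opp. Qed.

Lemma I2_sum (k : fieldType) (n : nat) (r : 'I_n -> nat) (I : Type) (s : seq I)
   (P : pred I) (F : I -> boxring k r) :
  (forall i, P i -> I2 (F i)) -> I2 (\sum_(i <- s | P i) F i).
Proof.
move=> H; elim/big_rec: _ => [|i x Pi Hx]; first exact: I2_0.
by apply: I2_add => //; apply: H.
Qed.

Lemma swapc_in (n : nat) (r : 'I_n -> nat) (a b : boxpt r) l :
  swapc a b l l = b l.
Proof. by rewrite /swapc ffunE dfwith_in. Qed.

Lemma swapc_out (n : nat) (r : 'I_n -> nat) (a b : boxpt r) l j :
  l != j -> swapc a b l j = a j.
Proof. by move=> H; rewrite /swapc ffunE dfwith_out. Qed.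


Lemma aux_ring (R : comRingType) (x A B s P : R) m :
  x ^+ m * (A * x - B * s) + s * (x ^+ m * B - x * P) = x * x ^+ m * A - x * (s * P).
Proof. ring. Qed.

Definition ck (n : nat) (r : 'I_n -> nat) (b c : boxpt r) (m : nat) : boxpt r :=
  @finfun 'I_n (fun j => 'I_(r j)) (fun j => if (j < m)%N then c j else b j).

Lemma telesc (k : fieldType) (n : nat) (r : 'I_n -> nat) (b c : boxpt r) m :
  (m <= n)%N ->
  I2 (xvar k b ^+ m * xvar k (ck b c m)
      - xvar k b * \prod_(j < n | (j < m)%N) xvar k (swapc b c j)).
Proof.
elim: m => [|m IH] Hm.
  have -> : ck b c 0 = b by apply/ffunP => j; rewrite ffunE.
  rewrite big_pred0 // expr0 mul1r mulr1 subrr; exact: I2_0.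
have Hmn : (m < n)%N by [].
set jm : 'I_n := Ordinal Hmn.
have E1 : swapc (ck b c m.+1) b jm = ck b c m.
  apply/ffunP => j; case: (eqVneq jm j) => [<-|Hj].
    by rewrite swapc_in ffunE /= ltnn.
  rewrite swapc_out // !ffunE ltnS leq_eqVlt.
  by have -> : (nat_of_ord j == m) = false by apply/negbTE; move: Hj; apply: contra => /eqP H; apply/eqP/val_inj.
have E2 : swapc b (ck b c m.+1) jm = swapc b c jm.
  by rewrite /swapc ffunE /= ltnSn.
have E3 : \prod_(j < n | (j < m.+1)%N) xvar k (swapc b c j)
    = xvar k (swapc b c jm) * \prod_(j < n | (j < m)%N) xvar k (swapc b c j).
  rewrite (bigD1 jm) //=; congr (_ * _); apply: eq_bigl => j.
  rewrite ltnS leq_eqVlt; case: (eqVneq jm j) => [<-|Hj]; first by rewrite eqxx ltnn.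
  have -> : (nat_of_ord j == m) = false by apply/negbTE; move: Hj; apply: contra => /eqP H; apply/eqP/val_inj.
  by rewrite andbT.
have M := I2_minor k jm (ck b c m.+1) b.
rewrite /minor2 E1 E2 in M.
have := I2_add (I2_mull (xvar k b ^+ m) M) (I2_mull (xvar k (swapc b c jm)) (IH (ltnW Hm))).
rewrite E3 exprS; congr I2.
by rewrite -/(ck b c m.+1); apply: aux_ring.
Qed.

Lemma telesc_full (k : fieldType) (n : nat) (r : 'I_n -> nat) (b c : boxpt r) :
  I2 (xvar k b ^+ n * xvar k c
      - xvar k b * \prod_(j < n) xvar k (swapc b c j)).
Proof.
have := telesc k b c (leqnn n).
have -> : ck b c n = c by apply/ffunP => j; rewrite ffunE ltn_ord.
by rewrite (eq_bigl predT) // => j; rewrite ltn_ord.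
Qed.


Definition idealP (R : comRingType) (I : R -> Prop) :=
  [/\ I 0, (forall x y, I x -> I y -> I (x + y)) & (forall c x, I x -> I (c * x))].

Lemma idealP_opp (R : comRingType) (I : R -> Prop) : idealP I -> forall x, I x -> I (- x).
Proof. by case=> _ _ Hm x Hx; rewrite -mulN1r; apply: Hm. Qed.

Lemma idealP_sub (R : comRingType) (I : R -> Prop) : idealP I -> forall x y, I x -> I y -> I (x - y).
Proof. by move=> HI x y Hx Hy; case: (HI) => _ Ha _; apply: Ha => //; apply: idealP_opp. Qed.

Lemma idealP_sum (R : comRingType) (I : R -> Prop) (T : Type) (s : seq T) (P : pred T) (F : T -> R) :
  idealP I -> (forall i, P i -> I (F i)) -> I (\sum_(i <- s | P i) F i).
Proof.
move=> [H0 Ha _] H; elim/big_rec: _ => [|i x Pi Hx]; first exact: H0.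
by apply: Ha => //; apply: H.
Qed.

Definition Jp (R : comRingType) (I : R -> Prop) (p : {poly R}) := forall d, I p`_d.

Lemma Jp_ideal (R : comRingType) (I : R -> Prop) : idealP I -> idealP (Jp I).
Proof.
move=> HI; case: (HI) => H0 Ha Hm; split.
- by move=> d; rewrite coef0.
- by move=> x y Hx Hy d; rewrite coefD; apply: Ha.
- move=> c x Hx d; rewrite coefM; apply: idealP_sum => // i _; exact: Hm.
Qed.

Lemma cong_mul (R : comRingType) (I : R -> Prop) : idealP I ->
  forall x1 y1 x2 y2, I (x1 - y1) -> I (x2 - y2) -> I (x1 * x2 - y1 * y2).
Proof.
move=> HI x1 y1 x2 y2 H1 H2; case: (HI) => _ Ha Hm.
have -> : x1 * x2 - y1 * y2 = x2 * (x1 - y1) + y1 * (x2 - y2).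
  by ring.
by apply: Ha; apply: Hm.
Qed.

Lemma cong_mmap (k : fieldType) (N : nat) (I : {mpoly k[N]} -> Prop) (HI : idealP I)
  (f : {rmorphism k -> {poly {mpoly k[N]}}}) (h1 h2 : 'I_N -> {poly {mpoly k[N]}}) :
  (forall i, Jp I (h1 i - h2 i)) -> forall G, Jp I (mmap f h1 G - mmap f h2 G).
Proof.
move=> H G; have HJ := Jp_ideal HI.
rewrite /mmap -sumrB; apply: idealP_sum => // m _.
rewrite -mulrBr; case: (HJ) => _ _ Hm; apply: Hm.
rewrite /mmap1.
have Hx : forall i e, Jp I (h1 i ^+ e - h2 i ^+ e).
  move=> i; elim => [|e IH]; first by rewrite !expr0 subrr; case: HJ.
  by rewrite !exprS; apply: (cong_mul HJ).
elim: (index_enum _) => [|i s IH]; first by rewrite !big_nil subrr; case: HJ.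
by rewrite !big_cons; apply: (cong_mul HJ).
Qed.

Definition fCg (k : fieldType) (N : nat) : {rmorphism k -> {poly {mpoly k[N]}}} :=
  (polyC \o (@mpolyC N k))%FUN.

Lemma mmap_theta (k : fieldType) (N : nat) (u : {mpoly k[N]}) G d :
  (mmap (fCg k N) (fun i => (u * 'X_i)%:P * 'X) G)`_d =
  \sum_(m <- msupp G) ((G@_m)%:MP * (u ^+ mdeg m * 'X_[m])) * (d == mdeg m)%:R.
Proof.
rewrite /mmap coef_sum; apply: eq_bigr => m _.
have -> : mmap1 (fun i => (u * 'X_i)%:P * 'X) m = (u ^+ mdeg m * 'X_[m])%:P * 'X ^+ (mdeg m).
  rewrite /mmap1 (eq_bigr (fun i => (u ^+ m i * 'X_i ^+ m i)%:P * 'X ^+ m i)); last first.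
    by move=> i _; rewrite exprMn -rmorphXn exprMn.
  rewrite big_split /= -rmorph_prod prodrXr big_split /= prodrXr -mpolyXE_id mdegE.
  by [].
by rewrite /= !coefCM coefXn mulrA.
Qed.

Lemma sum_delta (R : comRingType) (D e : nat) (a : nat -> R) : (e < D)%N ->
  \sum_(d < D) a d * ((d : nat) == e)%:R = a e.
Proof.
move=> He; rewrite (bigD1 (Ordinal He)) //= eqxx mulr1 big1 ?addr0 // => d Hd.
have -> : (nat_of_ord d == e) = false.
  by apply/negbTE; move: Hd; apply: contra => /eqP H; apply/eqP/val_inj.
by rewrite mulr0.
Qed.

Lemma final_step (k : fieldType) (N : nat) (I : {mpoly k[N]} -> Prop) (HI : idealP I)
  (u G : {mpoly k[N]}) :
  (forall d, I (mmap (fCg k N) (fun i => (u * 'X_i)%:P * 'X) G)`_d) ->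
  I (u ^+ msize G * G).
Proof.
move=> H.
have -> : u ^+ msize G * G =
   \sum_(d < msize G) u ^+ (msize G - d) * (mmap (fCg k N) (fun i => (u * 'X_i)%:P * 'X) G)`_d.
  under eq_bigr => d _ do rewrite mmap_theta mulr_sumr.
  rewrite exchange_big /= [X in _ ^+ _ * X = _]mpolyE mulr_sumr big_seq [RHS]big_seq.
  apply: eq_bigr => m Hm.
  have Hlt := msize_mdeg_lt Hm.
  under eq_bigr => i _ do rewrite mulrA.
  rewrite (sum_delta (fun d => u ^+ (msize G - d) * ((G@_m)%:MP * (u ^+ mdeg m * 'X_[m])))) //.
  rewrite -mul_mpolyC -{1}(subnK (ltnW Hlt)) exprD -mulrA; congr (_ * _); exact: mulrCA.
apply: idealP_sum => // d _; case: HI => _ _ Hm; exact: Hm.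
Qed.


Definition fC (k : fieldType) (n : nat) (r : 'I_n -> nat) : {rmorphism k -> {poly boxring k r}} :=
  fCg k #|boxpt r|.

Definition Psi0 (k : fieldType) (n : nat) (r : 'I_n -> nat) (b c : boxpt r) : boxring k r :=
  xvar k b * \prod_(j < n) xvar k (swapc b c j).

Definition hPhi (k : fieldType) (n : nat) (r : 'I_n -> nat) (b : boxpt r) (i : 'I_#|boxpt r|)
  : {poly boxring k r} := (Psi0 k b (enum_val i))%:P * 'X.

Definition Phi (k : fieldType) (n : nat) (r : 'I_n -> nat) (b : boxpt r) (G : boxring k r) :=
  mmap (fC k r) (hPhi k b) G.

Lemma aux_polyX (R : comRingType) (A B : R) :
  (A%:P * 'X) * (B%:P * 'X) = (A * B)%:P * ('X * 'X).
Proof. by rewrite polyCM mulrACA. Qed.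

Lemma aux2 (R : comRingType) (A B C D : R) :
  A * B = C * D -> (A%:P * 'X) * (B%:P * 'X) - (C%:P * 'X) * (D%:P * 'X) = 0.
Proof. by move=> E; rewrite !aux_polyX E subrr. Qed.

Lemma Phi_x (k : fieldType) (n : nat) (r : 'I_n -> nat) (b c : boxpt r) :
  Phi b (xvar k c) = (Psi0 k b c)%:P * 'X.
Proof. by rewrite /Phi /xvar mmapX mmap1U /hPhi enum_rankK. Qed.

Lemma Phi_minor (k : fieldType) (n : nat) (r : 'I_n -> nat) (b : boxpt r) l (a c : boxpt r) :
  Phi b (minor2 k l a c) = 0.
Proof.
rewrite /minor2 /Phi rmorphB !rmorphM /= -!/(Phi _ _) !Phi_x.
apply: aux2.
rewrite /Psi0 mulrACA [RHS]mulrACA -!big_split /=; congr (_ * _); apply: eq_bigr => j _.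
case: (eqVneq l j) => [<-|Hj].
  rewrite /swapc !ffunE !dfwith_in; exact: mulrC.
by rewrite /swapc !ffunE !dfwith_out.
Qed.

Lemma Phi_I2 (k : fieldType) (n : nat) (r : 'I_n -> nat) (b : boxpt r) (G : boxring k r) :
  I2 G -> Phi b G = 0.
Proof.
move=> [s [Hs ->]]; rewrite /Phi rmorph_sum /= big_seq; apply: big1 => q Hq.
rewrite rmorphM /=.
have [l [a [c E]]] := Hs q Hq.
rewrite E; have := @Phi_minor k n r b l a c; rewrite /Phi => ->.
by rewrite mulr0.
Qed.

Lemma xvar_neq0 (k : fieldType) (n : nat) (r : 'I_n -> nat) (c : boxpt r) :
  xvar k c != 0.
Proof.
apply/eqP => H; have := congr1 (mcoeff U_(enum_rank c)) H.
by rewrite /xvar mcoeffX eqxx mcoeff0 => /eqP; rewrite oner_eq0.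
Qed.

Lemma Psi0_neq0 (k : fieldType) (n : nat) (r : 'I_n -> nat) (b c : boxpt r) :
  Psi0 k b c != 0.
Proof.
rewrite /Psi0 mulf_neq0 ?xvar_neq0 //; apply/prodf_neq0 => j _; exact: xvar_neq0.
Qed.

Lemma aux3 (R : idomainType) (A : R) (Fp : {poly R}) m :
  A != 0 -> (A%:P * 'X) ^+ m * Fp = 0 -> Fp = 0.
Proof.
move=> HA /eqP; rewrite mulf_eq0 expf_eq0 mulf_eq0 polyC_eq0 (negbTE HA) polyX_eq0 andbF /=.
by move/eqP.
Qed.

Lemma Phi_F (k : fieldType) (n : nat) (r : 'I_n -> nat) (a b : boxpt r) lam (F : boxring k r) :
  I2 (xvar k a ^+ lam * F) -> Phi b F = 0.
Proof.
move/(Phi_I2 b); rewrite /Phi rmorphM rmorphXn /= -!/(Phi _ _) Phi_x.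
by apply: aux3; apply: Psi0_neq0.
Qed.


Lemma Jp_lin (R : comRingType) (I : R -> Prop) (HI : idealP I) (A B : R) :
  I (A - B) -> Jp I (A%:P * 'X - B%:P * 'X).
Proof.
move=> H d; rewrite -mulrBl -rmorphB coefMX coefC.
case: d => [|d] /=; first by case: HI.
by case: d => [|d] //=; case: HI.
Qed.

Lemma Jp_sub0 (R : comRingType) (I : R -> Prop) (p q : {poly R}) :
  q = 0 -> Jp I (p - q) -> Jp I p.
Proof. by move=> ->; rewrite subr0. Qed.

Lemma I2_ideal (k : fieldType) (n : nat) (r : 'I_n -> nat) :
  idealP (@I2 k n r).
Proof. split; [exact: I2_0 | exact: I2_add | exact: I2_mull]. Qed.

Unset Implicit Arguments.

Theorem lemma1p2 (k : fieldType) (n : nat) (r : 'I_n -> nat)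
  (hn : (2 <= n)%N) (F : boxring k r) :
  (exists (p : boxpt r) (lam : nat), (0 < lam)%N /\ I2 (xvar k p ^+ lam * F)) ->
  forall q : boxpt r, exists nu : nat, I2 (xvar k q ^+ nu * F).
Proof.
move=> [a [lam [_ H]]] q.
have HPhi : Phi q F = 0 := Phi_F q H.
have HI := @I2_ideal k n r.
set u : boxring k r := xvar k q ^+ n.
have Hc := @cong_mmap k #|boxpt r| (@I2 k n r) HI (fC k r)
   (fun i => (u * 'X_i)%:P * 'X) (hPhi k q).
have Hc' : forall i, Jp (@I2 k n r) ((fun i => (u * 'X_i)%:P * 'X) i - hPhi k q i).
  move=> i; rewrite /hPhi; apply: Jp_lin => //.
  have := telesc_full k q (enum_val i).
  have E : xvar k (enum_val i) = 'X_i by rewrite /xvar enum_valK.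
  by rewrite /Psi0 /u E.
have HF := Hc Hc' F.
have HF2 := Jp_sub0 HPhi HF.
have Hfin := @final_step k #|boxpt r| (@I2 k n r) HI u F HF2.
exists (n * msize F)%N; rewrite exprM; exact: Hfin.
Qed.
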